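(* Let $f$ be a real-valued symmetric ternary tensor in $(\mathbb{C}^3)^{\otimes 3}$, and suppose there exist $\alpha,\beta_1,\beta_2\in\mathbb{C}^3$ with $f=\alpha^{\otimes 3}+\beta_1^{\otimes 3}+\beta_2^{\otimes 3}$ and $\langle\alpha,\beta_i\rangle=\langle\beta_i,\beta_i\rangle=0$ for $i=1,2$. Then there is a $3\times 3$ real orthogonal matrix $T$, $\epsilon\in\{0,1\}$, and $c,\lambda\in\mathbb{R}$ with $c\neq 0$, such that $$c\,T^{\otimes 3}f=\epsilon\big(\beta_0^{\otimes 3}+\overline{\beta_0}^{\otimes 3}\big)+\lambda\, e_3^{\otimes 3},\qquad \beta_0=(1,i,0)^T.$$ Consequently there exist $\alpha\in\mathbb{R}^3$ and $\beta\in\mathbb{C}^3$ such that $f=\alpha^{\otimes 3}+\beta^{\otimes 3}+\overline{\beta}^{\otimes 3}$ with $\langle\alpha,\beta\rangle=\langle\beta,\beta\rangle=0$.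
   Context: Ternary signatures on a 3-element domain are identified with tensors in $(\mathbb{C}^3)^{\otimes 3}$; symmetric means invariant under permutation of the three arguments. For $u,v\in\mathbb{C}^n$, $\langle u,v\rangle=\sum_j u_jv_j$ (bilinear, no conjugation). $\overline{\beta}$ is the entrywise complex conjugate. $e_3=(0,0,1)^T$. For a matrix $T$, $Tf$ denotes $T^{\otimes 3}f$. *)

(* Defs.v *)
From HB Require Import structures.
From mathcomp Require Import all_boot all_order all_algebra.
From mathcomp Require Import complex.
From mathcomp Require Import reals.
Set Implicit Arguments. Unset Strict Implicit. Unset Printing Implicit Defensive.
Import Order.TTheory GRing.Theory Num.Theory.
Local Open Scope ring_scope.
Local Open Scope complex_scope.

Section Defs.
Variable R : realType.
Local Notation C := R[i].

Definition vec3 := 'I_3 -> C.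
Definition tens3 := 'I_3 -> 'I_3 -> 'I_3 -> C.

(* bilinear (no conjugation) pairing <u,v> = sum_j u_j v_j *)
Definition bil (u v : vec3) : C := \sum_(j < 3) u j * v j.

Definition conjv (v : vec3) : vec3 := fun j => conjc (v j).

Definition cube (v : vec3) : tens3 := fun i j k => v i * v j * v k.

Definition tadd (f g : tens3) : tens3 := fun i j k => f i j k + g i j k.
Definition tscale (c : C) (f : tens3) : tens3 := fun i j k => c * f i j k.

Definition real_tens (f : tens3) : Prop := forall i j k, complex.Im (f i j k) = 0.

Definition sym_tens (f : tens3) : Prop := forall i j k,
  [/\ f i j k = f j i k, f i j k = f i k j, f i j k = f k j i,
      f i j k = f j k i & f i j k = f k i j].

Definition orthogonal3 (T : 'M[R]_3) : Prop := T *m T^T = 1%:M.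

Definition tact (T : 'M[R]_3) (f : tens3) : tens3 := fun i j k =>
  \sum_(a < 3) \sum_(b < 3) \sum_(c < 3)
     (T i a)%:C * (T j b)%:C * (T k c)%:C * f a b c.

Definition e3 : vec3 := fun j => if val j == 2%N then 1 else 0.
Definition beta0 : vec3 := fun j =>
  if val j == 0%N then 1 else if val j == 1%N then 'i else 0.

Definition rvec (a : 'I_3 -> R) : vec3 := fun j => (a j)%:C.
End Defs.

(* Main.v *)
Require Import Defs.
From HB Require Import structures.
From mathcomp Require Import all_boot all_order all_algebra.
From mathcomp Require Import complex.
From mathcomp Require Import reals.
From mathcomp Require Import ring lra.
From Stdlib Require Import FunctionalExtensionality.
Set Implicit Arguments. Unset Strict Implicit. Unset Printing Implicit Defensive.
Import Order.TTheory GRing.Theory Num.Theory.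
Local Open Scope ring_scope.
Local Open Scope complex_scope.

Notation i0 := (@Ordinal 3 0 isT).
Notation i1 := (@Ordinal 3 1 isT).
Notation i2 := (@Ordinal 3 2 isT).
Set Implicit Arguments. Unset Strict Implicit. Unset Printing Implicit Defensive.
Import Order.TTheory GRing.Theory Num.Theory.
Local Open Scope ring_scope.
Local Open Scope complex_scope.

Section Work.
Variable R : realType.
Local Notation C := R[i].


Lemma sum3 (V : nmodType) (F : 'I_3 -> V) : \sum_(j < 3) F j = F i0 + F i1 + F i2.
Proof.
rewrite !big_ord_recr big_ord0 /= add0r.
by congr (F _ + F _ + F _); apply/val_inj.
Qed.

Lemma ord3P (i : 'I_3) : [\/ i = i0, i = i1 | i = i2].
Proof.
case: i => [[|[|[|n]]] Hn].
- by constructor 1; apply/val_inj.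
- by constructor 2; apply/val_inj.
- by constructor 3; apply/val_inj.
- by [].
Qed.

Lemma teq (f g : tens3 R) : (forall i j k, f i j k = g i j k) -> f = g.
Proof.
move=> H; apply: functional_extensionality => i.
apply: functional_extensionality => j; apply: functional_extensionality => k.
exact: H.
Qed.

Lemma veq (f g : vec3 R) : (forall i, f i = g i) -> f = g.
Proof. by move=> H; apply: functional_extensionality. Qed.

Lemma veq3 (f g : vec3 R) : f i0 = g i0 -> f i1 = g i1 -> f i2 = g i2 -> f = g.
Proof. by move=> H0 H1 H2; apply: veq => i; case: (ord3P i) => ->. Qed.

Definition vscale (c : C) (v : vec3 R) : vec3 R := fun j => c * v j.
Definition tzero : tens3 R := fun _ _ _ => 0.
Definition mv (T : 'M[R]_3) (v : vec3 R) : vec3 R :=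
  fun i => \sum_(a < 3) (T i a)%:C * v a.

Lemma tact_add (T : 'M[R]_3) (f g : tens3 R) : tact T (tadd f g) = tadd (tact T f) (tact T g).
Proof. by apply: teq => i j k; rewrite /tact /tadd !sum3; ring. Qed.

Lemma tact_scale (T : 'M[R]_3) (c : C) (f : tens3 R) : tact T (tscale c f) = tscale c (tact T f).
Proof. by apply: teq => i j k; rewrite /tact /tscale !sum3; ring. Qed.

Lemma tact_cube (T : 'M[R]_3) (v : vec3 R) : tact T (cube v) = cube (mv T v).
Proof. by apply: teq => i j k; rewrite /tact /cube /mv !sum3; ring. Qed.

Lemma mv_mul (A B : 'M[R]_3) (v : vec3 R) : mv (A *m B) v = mv A (mv B v).
Proof. by apply: veq => i; rewrite /mv !sum3 !mxE !sum3 !rmorphD !rmorphM; ring. Qed.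

Lemma mv_scale (T : 'M[R]_3) (c : C) (v : vec3 R) : mv T (vscale c v) = vscale c (mv T v).
Proof. by apply: veq => i; rewrite /mv /vscale !sum3; ring. Qed.

Lemma cube_scale (c : C) (v : vec3 R) : cube (vscale c v) = tscale (c ^+ 3) (cube v).
Proof. by apply: teq => i j k; rewrite /cube /vscale /tscale; ring. Qed.

Lemma mv1 (v : vec3 R) : mv 1%:M v = v.
Proof.
apply: veq3; rewrite /mv sum3 !mxE /=; ring.
Qed.

End Work.

Section Work2.
Variable R : realType.
Local Notation C := R[i].
Local Notation Im := complex.Im.
Local Notation Re := complex.Re.

Lemma cImD (a b : C) : Im (a + b) = Im a + Im b.
Proof. by case: a => a1 a2; case: b => b1 b2. Qed.
Lemma cImM (a b : C) : Im (a * b) = Re a * Im b + Im a * Re b.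
Proof. case: a => a1 a2; case: b => b1 b2 /=. ring. Qed.
Lemma cReD (a b : C) : Re (a + b) = Re a + Re b.
Proof. by case: a => a1 a2; case: b => b1 b2. Qed.
Lemma cReM (a b : C) : Re (a * b) = Re a * Re b - Im a * Im b.
Proof. case: a => a1 a2; case: b => b1 b2 /=. ring. Qed.
Lemma crealE (z : C) : Im z = 0 -> z = (Re z)%:C.
Proof. by case: z => a b /= ->. Qed.
Lemma cconj_real (z : C) : Im z = 0 -> conjc z = z.
Proof. by case: z => a b /= ->; rewrite oppr0. Qed.
Lemma crealC (x : R) : Im (x%:C) = 0. Proof. by []. Qed.
Lemma crealMM (a b : C) : Im a = 0 -> Im b = 0 -> Im (a * b) = 0.
Proof. by move=> Ha Hb; rewrite cImM Ha Hb; ring. Qed.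
Lemma crealDD (a b : C) : Im a = 0 -> Im b = 0 -> Im (a + b) = 0.
Proof. by move=> Ha Hb; rewrite cImD Ha Hb; ring. Qed.
Lemma cImN (a : C) : Im (- a) = - Im a.
Proof. by case: a. Qed.
Lemma real_sum3 (F : 'I_3 -> C) : (forall j, Im (F j) = 0) -> Im (\sum_(j<3) F j) = 0.
Proof. by move=> H; rewrite sum3 !crealDD. Qed.

Lemma real_tact (T : 'M[R]_3) (f : tens3 R) : real_tens f -> real_tens (tact T f).
Proof.
move=> Hf i j k; rewrite /tact.
apply: real_sum3 => a; apply: real_sum3 => b; apply: real_sum3 => c.
by rewrite !crealMM.
Qed.

Lemma orthT (T : 'M[R]_3) : orthogonal3 T -> forall a b : 'I_3,
  \sum_(k < 3) T k a * T k b = (a == b)%:R.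
Proof.
move=> /mulmx1C /matrixP H a b; have := H a b.
by rewrite !mxE => <-; apply: eq_bigr => k _; rewrite mxE.
Qed.

Lemma bil_mv (T : 'M[R]_3) (x y : vec3 R) : orthogonal3 T ->
  bil (mv T x) (mv T y) = bil x y.
Proof.
move=> /orthT H.
have E : bil (mv T x) (mv T y) =
  \sum_(a<3) \sum_(b<3) (\sum_(k<3) T k a * T k b)%:C * x a * y b.
  by rewrite /bil /mv !sum3 !rmorphD !rmorphM; ring.
rewrite E; under eq_bigr do under eq_bigr do rewrite H.
rewrite /bil !sum3 /=; ring.
Qed.

Lemma conjv_mv (T : 'M[R]_3) (v : vec3 R) : conjv (mv T v) = mv T (conjv v).
Proof.
have cm : forall (x:R) (z:C), conjc (x%:C * z) = x%:C * conjc z.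
  by move=> x [a b]; simpc.
have cd : forall (z w:C), conjc (z + w) = conjc z + conjc w.
  by move=> [a b] [c d]; simpc.
by apply: veq => i; rewrite /conjv /mv !sum3 !cd !cm.
Qed.

End Work2.

Section Work3.
Variable R : realType.
Local Notation C := R[i].
Local Notation Im := complex.Im.
Local Notation Re := complex.Re.

Lemma sqr3_eq0 (x0 x1 x2 : R) : x0^+2 + x1^+2 + x2^+2 = 0 ->
  [/\ x0 = 0, x1 = 0 & x2 = 0].
Proof.
move=> H.
have h0 := sqr_ge0 x0; have h1 := sqr_ge0 x1; have h2 := sqr_ge0 x2.
have e0 : x0 ^+ 2 = 0 by lra.
have e1 : x1 ^+ 2 = 0 by lra.
have e2 : x2 ^+ 2 = 0 by lra.
by split; apply/eqP; rewrite -sqrf_eq0; apply/eqP.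
Qed.

Lemma sq_expand3 (c : C) (w0 w1 w2 : R) :
  (c * w0%:C) ^+ 2 + (c * w1%:C) ^+ 2 + (c * w2%:C) ^+ 2 =
  c ^+ 2 * (w0 ^+ 2 + w1 ^+ 2 + w2 ^+ 2)%:C.
Proof. ring. Qed.

Lemma vec_cases (b : vec3 R) : (forall j, b j = 0) \/ exists j, b j != 0.
Proof.
case: (b i0 =P 0) => H0; last by right; exists i0; apply/eqP.
case: (b i1 =P 0) => H1; last by right; exists i1; apply/eqP.
case: (b i2 =P 0) => H2; last by right; exists i2; apply/eqP.
by left => j; case: (ord3P j) => ->.
Qed.

Lemma iso_cube_zero (K : C) (b : vec3 R) : bil b b = 0 ->
  real_tens (tscale K (cube b)) -> tscale K (cube b) = tzero R.
Proof.
move=> Hb Hr.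
case: (K =P 0) => [->|/eqP HK].
  by apply: teq => i j k; rewrite /tscale /tzero mul0r.
case: (vec_cases b) => [H0|[j Hj]].
  by apply: teq => i j k; rewrite /tscale /tzero /cube !H0 !mulr0.
exfalso.
have [w Ew] : exists w : 'I_3 -> R, forall k, K * (b j * b j * b k) = (w k)%:C.
  by exists (fun k => Re (K * (b j * b j * b k))) => k; exact: (crealE (Hr j j k)).
have [a Ea] : exists a : R, K * (b j * b j * b j) = a%:C by exists (w j).
have wj : w j = a by apply: complexI; rewrite -Ew -Ea.
have Ha : a != 0.
  apply/eqP => Ha0; move: Ea; rewrite Ha0 => /eqP.
  by rewrite mulf_eq0 (negbTE HK) /= !mulf_eq0 (negbTE Hj).
have Eb : forall k, b k * a%:C = b j * (w k)%:C.
  by move=> k; rewrite -Ew -Ea; ring.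
have : bil b b * (a%:C)^+2 = (b j)^+2 * ((w i0)^+2 + (w i1)^+2 + (w i2)^+2)%:C.
  have -> : bil b b * (a%:C)^+2 = (b i0 * a%:C)^+2 + (b i1 * a%:C)^+2 + (b i2 * a%:C)^+2.
    by rewrite /bil !sum3; ring.
  by rewrite !Eb sq_expand3.
rewrite Hb mul0r => /esym /eqP; rewrite mulf_eq0 expf_eq0 /= (negbTE Hj) /=.
move=> /eqP [] /sqr3_eq0 [h0 h1 h2].
by move: Ha; rewrite -wj; case: (ord3P j) => ->; rewrite ?h0 ?h1 ?h2 eqxx.
Qed.

Definition cross (x y : vec3 R) : vec3 R := fun k =>
  if val k == 0%N then x i1 * y i2 - x i2 * y i1
  else if val k == 1%N then x i2 * y i0 - x i0 * y i2
  else x i0 * y i1 - x i1 * y i0.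

Lemma crossE0 (x y : vec3 R) : cross x y i0 = x i1 * y i2 - x i2 * y i1. Proof. by []. Qed.
Lemma crossE1 (x y : vec3 R) : cross x y i1 = x i2 * y i0 - x i0 * y i2. Proof. by []. Qed.
Lemma crossE2 (x y : vec3 R) : cross x y i2 = x i0 * y i1 - x i1 * y i0. Proof. by []. Qed.

Lemma cross_iso (x y : vec3 R) : bil x x = 0 -> bil y y = 0 -> bil x y = 0 ->
  forall k, cross x y k = 0.
Proof.
move=> Hx Hy Hxy k.
have key : (cross x y k)^+2 = bil x x * (bil y y - y k ^+2)
   - bil x y * (bil x y - x k * y k) + x k * (bil x y * y k - bil y y * x k).
  by case: (ord3P k) => ->; rewrite ?crossE0 ?crossE1 ?crossE2 /bil !sum3; ring.
move: key; rewrite Hx Hy Hxy !(mul0r, mulr0, subr0, add0r, addr0, sub0r, oppr0).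
by move/eqP; rewrite sqrf_eq0 => /eqP.
Qed.

Lemma cross0_dep (x y : vec3 R) (j : 'I_3) : (forall k, cross x y k = 0) ->
  x j != 0 -> y = vscale (y j / x j) x.
Proof.
move=> H Hxj.
have E0 := H i0; have E1 := H i1; have E2 := H i2.
rewrite ?crossE0 ?crossE1 ?crossE2 in E0 E1 E2.
have Hab : forall a b, x a * y b = x b * y a.
  move=> a b; apply/eqP; rewrite -subr_eq0; apply/eqP.
  case: (ord3P a) => ->; case: (ord3P b) => ->;
  first [ring | rewrite -E0; ring | rewrite -E1; ring | rewrite -E2; ring
        | rewrite -oppr0 -E0; ring | rewrite -oppr0 -E1; ring | rewrite -oppr0 -E2; ring].
apply: veq => k; rewrite /vscale.
have E := Hab j k.
rewrite -[y k](mulKf Hxj) E; field.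
by [].
Qed.

Lemma conj_i : conjc ('i%C : C) = - 'i%C.
Proof. by apply/eqP; rewrite eq_complex /= oppr0 !eqxx. Qed.

Lemma sqr_ii : ('i%C : C) ^+ 2 = -1.
Proof. exact: sqr_i. Qed.

Lemma b0E0 : beta0 R i0 = 1. Proof. by []. Qed.
Lemma b0E1 : beta0 R i1 = 'i%C. Proof. by []. Qed.
Lemma b0E2 : beta0 R i2 = 0. Proof. by []. Qed.
Lemma e3E0 : e3 R i0 = 0. Proof. by []. Qed.
Lemma e3E1 : e3 R i1 = 0. Proof. by []. Qed.
Lemma e3E2 : e3 R i2 = 1. Proof. by []. Qed.

Lemma iso_e3 (g : vec3 R) : g i2 = 0 -> bil g g = 0 ->
  g = vscale (g i0) (beta0 R) \/ g = vscale (g i0) (conjv (beta0 R)).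
Proof.
move=> H2 Hg.
have : (g i1 - 'i%C * g i0) * (g i1 + 'i%C * g i0) = 0.
  have -> : (g i1 - 'i%C * g i0) * (g i1 + 'i%C * g i0) =
     bil g g - g i2 ^+ 2 - ('i%C ^+ 2 + 1) * g i0 ^+ 2.
    by rewrite /bil !sum3; ring.
  by rewrite sqr_ii Hg H2; ring.
move/eqP; rewrite mulf_eq0 => /orP [] /eqP E.
- left; apply: veq3; rewrite /vscale ?b0E0 ?b0E1 ?b0E2 ?H2.
  + by rewrite mulr1.
  + by apply/eqP; rewrite -subr_eq0 -E; apply/eqP; ring.
  + by rewrite mulr0.
- right; apply: veq3; rewrite /vscale /conjv ?b0E0 ?b0E1 ?b0E2 ?H2.
  + by rewrite conjc1 mulr1.
  + by rewrite conj_i; apply/eqP; rewrite -subr_eq0 -E; apply/eqP; ring.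
  + by rewrite conjc0 mulr0.
Qed.

End Work3.

Section Work4.
Variable R : realType.
Local Notation C := R[i].
Local Notation Im := complex.Im.
Local Notation Re := complex.Re.

Lemma modR (x y k e : R) : e = 0 -> x - y = k * e -> x = y.
Proof. by move=> -> /eqP; rewrite mulr0 subr_eq0 => /eqP. Qed.

Definition e3r : 'I_3 -> R := fun j => if val j == 2%N then 1 else 0.

Lemma e3_rvec : e3 R = rvec e3r.
Proof. by apply: veq3. Qed.

Lemma mv_rvec (T : 'M[R]_3) (u : 'I_3 -> R) :
  mv T (rvec u) = rvec (fun i => \sum_(k<3) T i k * u k).
Proof. by apply: veq => i; rewrite /mv /rvec !sum3; ring. Qed.

Lemma rvec_eq (u v : 'I_3 -> R) : (forall i, u i = v i) -> rvec u = rvec v.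
Proof. by move=> H; apply: veq => i; rewrite /rvec H. Qed.

Lemma house_orth (w : 'I_3 -> R) (d : R) : d != 0 ->
  w i0 ^+ 2 + w i1 ^+ 2 + w i2 ^+ 2 - 2 * d = 0 ->
  orthogonal3 (\matrix_(i < 3, j < 3) ((i == j)%:R - w i * w j / d)).
Proof.
move=> Hd He; apply/matrixP => i j; rewrite !mxE sum3 !mxE.
apply: (modR (k := w i * w j / d ^+ 2) He).
case: (ord3P i) => ->; case: (ord3P j) => ->; rewrite /=; field; by [].
Qed.

Lemma house (u : 'I_3 -> R) : u i0 ^+ 2 + u i1 ^+ 2 + u i2 ^+ 2 = 1 ->
  exists T, orthogonal3 T /\ mv T (rvec u) = e3 R.
Proof.
move=> Hu.
case: (u i2 =P 1) => [H2|/eqP H2].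
  have : u i0 ^+ 2 + u i1 ^+ 2 + 0 ^+ 2 = 0.
    apply: (modR (k:=1) (e:= u i0 ^+ 2 + u i1 ^+ 2 + u i2 ^+ 2 - 1)).
      by rewrite Hu subrr.
    by rewrite H2; ring.
  case/sqr3_eq0 => h0 h1 _.
  exists 1%:M; split; first by rewrite /orthogonal3 trmx1 mulmx1.
  by rewrite mv1; apply: veq3; rewrite /rvec /= ?h0 ?h1 ?H2.
have Hd : 1 - u i2 != 0 by rewrite subr_eq0 eq_sym.
pose w := fun i : 'I_3 => u i - e3r i.
exists (\matrix_(i < 3, j < 3) ((i == j)%:R - w i * w j / (1 - u i2))).
split.
  apply: house_orth => //.
  rewrite /w /e3r /= !subr0.
  have He0 : u i0 ^+ 2 + u i1 ^+ 2 + u i2 ^+ 2 - 1 = 0 by rewrite Hu subrr.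
  by apply: (modR (k := 1) He0); ring.
rewrite mv_rvec e3_rvec; apply: rvec_eq => i; rewrite sum3 !mxE.
have He : u i0 ^+ 2 + u i1 ^+ 2 + u i2 ^+ 2 - 1 = 0 by rewrite Hu subrr.
apply: (modR (k := - w i / (1 - u i2)) He).
case: (ord3P i) => ->; rewrite /w /e3r /=; field; by [].
Qed.

Lemma rot_orth (c s : R) : c ^+ 2 + s ^+ 2 = 1 ->
  orthogonal3 (\matrix_(i < 3, j < 3)
     (if (val i == 2%N) || (val j == 2%N) then (val i == val j)%:R
      else if val i == val j then c else if val i == 0%N then - s else s)).
Proof.
move=> Hcs; have He : c ^+ 2 + s ^+ 2 - 1 = 0 by rewrite Hcs subrr.
apply/matrixP => i j; rewrite !mxE sum3 !mxE.
apply: (modR (k := ((i == j) && (val i != 2%N))%:R) He).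
case: (ord3P i) => ->; case: (ord3P j) => ->; rewrite /=; ring.
Qed.

End Work4.

Section Work5.
Variable R : realType.
Local Notation C := R[i].
Local Notation Im := complex.Im.
Local Notation Re := complex.Re.
Local Notation b0 := (beta0 R).
Local Notation cb0 := (conjv (beta0 R)).

Lemma step1 (g1 g2 : vec3 R) : g1 i2 = 0 -> g2 i2 = 0 -> bil g1 g1 = 0 -> bil g2 g2 = 0 ->
  exists A B : C, tadd (cube g1) (cube g2) = tadd (tscale A (cube b0)) (tscale B (cube cb0)).
Proof.
move=> h1 h2 H1 H2.
case: (iso_e3 h1 H1) => ->; case: (iso_e3 h2 H2) => ->; rewrite !cube_scale.
- by exists (g1 i0 ^+ 3 + g2 i0 ^+ 3), 0; apply: teq => i j k; rewrite /tadd /tscale; ring.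
- by exists (g1 i0 ^+ 3), (g2 i0 ^+ 3); apply: teq => i j k; rewrite /tadd /tscale; ring.
- by exists (g2 i0 ^+ 3), (g1 i0 ^+ 3); apply: teq => i j k; rewrite /tadd /tscale; ring.
- by exists 0, (g1 i0 ^+ 3 + g2 i0 ^+ 3); apply: teq => i j k; rewrite /tadd /tscale; ring.
Qed.

Lemma step2 (A B : C) : real_tens (tadd (tscale A (cube b0)) (tscale B (cube cb0))) ->
  B = conjc A.
Proof.
move=> H; have H0 := H i0 i0 i0; have H1 := H i1 i1 i1.
move: H0 H1; clear H; rewrite /tadd /tscale /cube /conjv !b0E0 !b0E1 conjc1 conj_i.
case: A => a1 a2; case: B => b1 b2 /=.

move=> E0 E1.
have e1 : b1 = a1 by apply: (modR (k := 1) E1); ring.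
have e2 : b2 = - a2 by apply: (modR (k := 1) E0); ring.
by rewrite e1 e2.
Qed.

Lemma conjX3 (a : C) : conjc (a ^+ 3) = (conjc a) ^+ 3.
Proof. by case: a => x y; apply/eqP; rewrite !exprS !expr0 !mulr1 eq_complex /=; apply/andP; split; apply/eqP; ring. Qed.

Lemma conjv_scale (a : C) (v : vec3 R) : conjv (vscale a v) = vscale (conjc a) (conjv v).
Proof. by apply: veq => i; rewrite /conjv /vscale; case: a => x y; case: (v i) => p q; apply/eqP; rewrite eq_complex /=; apply/andP; split; apply/eqP; ring. Qed.

Lemma tact1 (v w : vec3 R) : tact 1%:M (tadd (cube v) (cube w)) = tadd (cube v) (cube w).
Proof. by rewrite tact_add !tact_cube !mv1. Qed.

Lemma step3 (A : C) : exists S (r : R), [/\ orthogonal3 S, mv S (e3 R) = e3 R &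
  tact S (tadd (tscale A (cube b0)) (tscale (conjc A) (cube cb0))) =
  tscale ((r ^+ 3)%:C) (tadd (cube b0) (cube cb0))].
Proof.
have Ha : (3.-root A) ^+ 3 = A by apply: rootCK.
move: (3.-root A) Ha => a <-.
rewrite conjX3 -!cube_scale -conjv_scale.
case: a => x y.
case: (boolP ((x == 0) && (y == 0))) => [/andP [/eqP -> /eqP ->]|Hxy].
  exists 1%:M, 0; split; first by rewrite /orthogonal3 trmx1 mulmx1.
    by rewrite mv1.
  have z0 : (0 +i* 0 : C) = 0 by [].
  rewrite z0 tact1; apply: teq => i j k; rewrite /tadd /tscale /cube /conjv /vscale.
  by rewrite !mul0r conjc0; ring.
have Hp : 0 < x ^+ 2 + y ^+ 2.
  have gx := sqr_ge0 x; have gy := sqr_ge0 y.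
  case/nandP: Hxy => H.
    have : 0 < x ^+ 2 by rewrite exprn_even_gt0 //= H orbT.
    lra.
  have : 0 < y ^+ 2 by rewrite exprn_even_gt0 //= H orbT.
  lra.
pose r := Num.sqrt (x ^+ 2 + y ^+ 2).
have Hr2 : r ^+ 2 = x ^+ 2 + y ^+ 2 by rewrite sqr_sqrtr // ltW.
have Hr : r != 0 by rewrite sqrtr_eq0 -ltNge.
have He : x ^+ 2 + y ^+ 2 - r ^+ 2 = 0 by rewrite Hr2 subrr.
pose c := x / r; pose s := y / r.
have Hcs : c ^+ 2 + s ^+ 2 = 1.
  by apply: (modR (k := 1 / r ^+ 2) He); rewrite /c /s; field.
exists (\matrix_(i < 3, j < 3)
     (if (val i == 2%N) || (val j == 2%N) then (val i == val j)%:R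
      else if val i == val j then c else if val i == 0%N then - s else s)), r.
split; first exact: rot_orth.
  by apply: veq3; rewrite /mv sum3 !mxE /= ?e3E0 ?e3E1 ?e3E2; ring.
have Hm : mv (\matrix_(i < 3, j < 3)
     (if (val i == 2%N) || (val j == 2%N) then (val i == val j)%:R
      else if val i == val j then c else if val i == 0%N then - s else s))
     (vscale (x +i* y) b0) = vscale r%:C b0.
  apply: veq3; rewrite /mv /vscale sum3 !mxE /= ?b0E0 ?b0E1 ?b0E2;
  apply/eqP; rewrite eq_complex /=; apply/andP; split; apply/eqP;
  rewrite /c /s; first [apply: (modR (k := 1 / r) He); field; by [] | field; by []].
rewrite tact_add !tact_cube -conjv_mv Hm conjv_scale conjc_real !cube_scale.
by apply: teq => i j k; rewrite /tadd /tscale; ring.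
Qed.

End Work5.

Section Work6.
Variable R : realType.
Local Notation C := R[i].
Local Notation Im := complex.Im.
Local Notation Re := complex.Re.
Local Notation b0 := (beta0 R).
Local Notation cb0 := (conjv (beta0 R)).

Definition Goal0 (f : tens3 R) := exists (T : 'M[R]_3) (l0 r : R), orthogonal3 T /\
  tact T f = tadd (tscale l0%:C (cube (e3 R))) (tscale ((r ^+ 3)%:C) (tadd (cube b0) (cube cb0))).

Lemma bil_e3 (v : vec3 R) : bil v (e3 R) = v i2.
Proof. by rewrite /bil sum3 e3E0 e3E1 e3E2; ring. Qed.

Lemma orth_mul (A B : 'M[R]_3) : orthogonal3 A -> orthogonal3 B -> orthogonal3 (A *m B).
Proof.
rewrite /orthogonal3 => HA HB.
by rewrite trmx_mul mulmxA -(mulmxA A) HB mulmx1 HA.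
Qed.

Lemma e3_real (i : 'I_3) : Im (e3 R i) = 0.
Proof. by case: (ord3P i) => ->. Qed.

Lemma reduce_u (f : tens3 R) (mu : C) (u : 'I_3 -> R) (b1 b2 : vec3 R) :
  real_tens f -> u i0 ^+ 2 + u i1 ^+ 2 + u i2 ^+ 2 = 1 ->
  f = tadd (tadd (cube (vscale mu (rvec u))) (cube b1)) (cube b2) ->
  bil b1 (rvec u) = 0 -> bil b2 (rvec u) = 0 -> bil b1 b1 = 0 -> bil b2 b2 = 0 ->
  Goal0 f.
Proof.
move=> Hr Hu Hf H1u H2u H11 H22.
have [T1 [OT1 HT1]] := house Hu.
pose g1 := mv T1 b1; pose g2 := mv T1 b2.
have g12 : g1 i2 = 0 by rewrite -bil_e3 -HT1 bil_mv.
have g22 : g2 i2 = 0 by rewrite -bil_e3 -HT1 bil_mv.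
have g11 : bil g1 g1 = 0 by rewrite bil_mv.
have g2s : bil g2 g2 = 0 by rewrite bil_mv.
have HT1f : tact T1 f = tadd (tadd (cube (vscale mu (e3 R))) (cube g1)) (cube g2).
  by rewrite Hf !tact_add !tact_cube mv_scale HT1.
have Hr1 := real_tact T1 Hr.
have Hmu : Im (mu ^+ 3) = 0.
  have := Hr1 i2 i2 i2; rewrite HT1f /tadd /cube /vscale g12 g22 e3E2.
  have -> : mu * 1 * (mu * 1) * (mu * 1) + 0 * 0 * 0 + 0 * 0 * 0 = mu ^+ 3 by ring.
  by [].
have [m Hm] : exists m : R, mu ^+ 3 = m%:C by exists (Re (mu ^+ 3)); exact: crealE.
have HG : real_tens (tadd (cube g1) (cube g2)).
  move=> i j k; have := Hr1 i j k; rewrite HT1f /tadd /cube /vscale.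
  have -> : mu * e3 R i * (mu * e3 R j) * (mu * e3 R k) = m%:C * (e3 R i * e3 R j * e3 R k).
    by rewrite -Hm; ring.
  have Ha : Im (m%:C * (e3 R i * e3 R j * e3 R k)) = 0.
    by rewrite crealMM // (crealMM (crealMM (e3_real i) (e3_real j)) (e3_real k)).
  by rewrite !cImD Ha add0r.
have [A [B HAB]] := step1 g12 g22 g11 g2s.
have HB : B = conjc A by apply: step2; rewrite -HAB.
have [S [r [OS HSe HS]]] := step3 A.
exists (S *m T1), m, r; split; first exact: orth_mul.
have -> : tact (S *m T1) f = tadd (cube (vscale mu (e3 R))) (tact S (tadd (cube g1) (cube g2))).
  rewrite Hf !tact_add !tact_cube !mv_mul mv_scale HT1 mv_scale HSe.
  by apply: teq => i j k; rewrite /tadd; ring.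
rewrite HAB HB HS cube_scale Hm.
by apply: teq => i j k; rewrite /tadd /tscale.
Qed.

End Work6.

Section Work7.
Variable R : realType.
Local Notation C := R[i].
Local Notation Im := complex.Im.
Local Notation Re := complex.Re.
Local Notation b0 := (beta0 R).
Local Notation cb0 := (conjv (beta0 R)).

Lemma goal0_zero (f : tens3 R) : f = tzero R -> Goal0 f.
Proof.
move=> ->; exists 1%:M, 0, 0; split; first by rewrite /orthogonal3 trmx1 mulmx1.
by apply: teq => i j k; rewrite /tact /tzero /tadd /tscale !sum3; ring.
Qed.

Lemma normalize (w : 'I_3 -> R) (j : 'I_3) : w j != 0 ->
  exists (u : 'I_3 -> R) (t : R), [/\ u i0 ^+ 2 + u i1 ^+ 2 + u i2 ^+ 2 = 1, t != 0 &
     forall i, w i = t * u i].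
Proof.
move=> Hj.
have Hp : 0 < w i0 ^+ 2 + w i1 ^+ 2 + w i2 ^+ 2.
  have g0 := sqr_ge0 (w i0); have g1 := sqr_ge0 (w i1); have g2 := sqr_ge0 (w i2).
  have : 0 < w j ^+ 2 by rewrite exprn_even_gt0 //= Hj orbT.
  by case: (ord3P j) => -> ?; lra.
pose t := Num.sqrt (w i0 ^+ 2 + w i1 ^+ 2 + w i2 ^+ 2).
have Ht2 : t ^+ 2 = w i0 ^+ 2 + w i1 ^+ 2 + w i2 ^+ 2 by rewrite sqr_sqrtr // ltW.
have Ht : t != 0 by rewrite sqrtr_eq0 -ltNge.
exists (fun i => w i / t), t; split => //.
  have He : w i0 ^+ 2 + w i1 ^+ 2 + w i2 ^+ 2 - t ^+ 2 = 0 by rewrite Ht2 subrr.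
  by apply: (modR (k := 1 / t ^+ 2) He); field.
by move=> i; field.
Qed.

Lemma bil_sym (x y : vec3 R) : bil x y = bil y x.
Proof. by rewrite /bil !sum3; ring. Qed.

Lemma bil_scale_l (c : C) (x y : vec3 R) : bil (vscale c x) y = c * bil x y.
Proof. by rewrite /bil /vscale !sum3; ring. Qed.

Lemma rvec_scale (t : R) (u : 'I_3 -> R) : rvec (fun i => t * u i) = vscale t%:C (rvec u).
Proof. by apply: veq => i; rewrite /rvec /vscale; ring. Qed.

Lemma case_q (f : tens3 R) (al b1 b2 : vec3 R) : real_tens f ->
  f = tadd (tadd (cube al) (cube b1)) (cube b2) ->
  bil al b1 = 0 -> bil b1 b1 = 0 -> bil al b2 = 0 -> bil b2 b2 = 0 ->
  bil al al != 0 -> Goal0 f.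
Proof.
move=> Hr Hf H1 H11 H2 H22 Hq.
have Hh : forall a, \sum_(j<3) f a j j = bil al al * al a.
  move=> a; rewrite Hf.
  transitivity (al a * bil al al + b1 a * bil b1 b1 + b2 a * bil b2 b2).
    by rewrite /tadd /cube /bil !sum3; ring.
  by rewrite H11 H22; ring.
have Hhr : forall a, \sum_(j<3) f a j j = (Re (\sum_(j<3) f a j j))%:C.
  by move=> a; apply: crealE; apply: real_sum3 => j; exact: Hr.
have [j Hj] : exists j, al j != 0.
  case: (vec_cases al) => [H0|//].
  by move: Hq; rewrite /bil sum3 !H0 mul0r !addr0 eqxx.
pose w a := Re (\sum_(k<3) f a k k).
have Hwa : forall a, (w a)%:C = bil al al * al a by move=> a; rewrite /w -Hhr Hh.
have Hw : w j != 0.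
  apply/eqP => H0; have := Hwa j; rewrite H0 => /esym /eqP.
  by rewrite mulf_eq0 (negbTE Hq) (negbTE Hj).
have [u [t [Hu Ht Hwu]]] := normalize Hw.
have Hal : al = vscale (t%:C / bil al al) (rvec u).
  apply: veq => a; rewrite /vscale /rvec.
  have E := Hwa a; rewrite Hwu in E.
  rewrite -[al a](mulKf Hq) -E; field; by [].
have Hmu : t%:C / bil al al != 0.
  by rewrite mulf_eq0 invr_eq0 (negbTE Hq) orbF; apply/eqP => /complexI /eqP; apply/negP.
move: (t%:C / bil al al) Hal Hmu => mu Hal Hmu.
have Hb1 : bil b1 (rvec u) = 0.
  move: H1; rewrite bil_sym Hal bil_sym bil_scale_l => /eqP; rewrite mulf_eq0 (negbTE Hmu) /=.
  by move/eqP; rewrite bil_sym.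
have Hb2 : bil b2 (rvec u) = 0.
  move: H2; rewrite bil_sym Hal bil_sym bil_scale_l => /eqP; rewrite mulf_eq0 (negbTE Hmu) /=.
  by move/eqP; rewrite bil_sym.
apply: (reduce_u (mu := mu) Hr Hu _ Hb1 Hb2 H11 H22).
by rewrite Hf -Hal.
Qed.

Lemma case_iso (f : tens3 R) (al b1 b2 : vec3 R) (j : 'I_3) : real_tens f ->
  f = tadd (tadd (cube al) (cube b1)) (cube b2) ->
  bil al b1 = 0 -> bil b1 b1 = 0 -> bil al b2 = 0 -> bil b2 b2 = 0 ->
  bil al al = 0 -> al j != 0 -> Goal0 f.
Proof.
move=> Hr Hf H1 H11 H2 H22 Hq Hj.
have E1 := cross0_dep (cross_iso Hq H11 H1) Hj.
have E2 := cross0_dep (cross_iso Hq H22 H2) Hj.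
move: (b1 j / al j) (b2 j / al j) E1 E2 => k1 k2 E1 E2.
have HK : f = tscale (1 + k1 ^+ 3 + k2 ^+ 3) (cube al).
  by rewrite Hf E1 E2 !cube_scale; apply: teq => a b c; rewrite /tadd /tscale; ring.
apply: goal0_zero; rewrite HK; apply: iso_cube_zero => //.
by rewrite -HK.
Qed.

Lemma cconjD (z w : C) : conjc (z + w) = conjc z + conjc w.
Proof. by case: z => a b; case: w => c d; apply/eqP; rewrite eq_complex /=; apply/andP; split; apply/eqP; ring. Qed.
Lemma cconjM (z w : C) : conjc (z * w) = conjc z * conjc w.
Proof. by case: z => a b; case: w => c d; apply/eqP; rewrite eq_complex /=; apply/andP; split; apply/eqP; ring. Qed.

Lemma conj_sum3 (F G : 'I_3 -> C) : (forall l, Im (F l) = 0) ->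
  \sum_(l < 3) F l * conjc (G l) = conjc (\sum_(l < 3) F l * G l).
Proof. by move=> H; rewrite !sum3 !cconjD !cconjM !(cconj_real (H _)). Qed.

Lemma kill (c1 c2 : C) (x y : vec3 R) (k : 'I_3) :
  (forall a b, c1 * x a * x b + c2 * y a * y b = 0) -> cross x y k != 0 ->
  c1 = 0 /\ c2 = 0.
Proof.
move=> P Hk.
have Q1 : forall b, c1 * x b * cross x y k = 0.
  move=> b; case: (ord3P k) => ->.
  - rewrite crossE0; transitivity (y i2 * (c1 * x i1 * x b + c2 * y i1 * y b)
        - y i1 * (c1 * x i2 * x b + c2 * y i2 * y b)); first ring.
    by rewrite !P; ring.
  - rewrite crossE1; transitivity (y i0 * (c1 * x i2 * x b + c2 * y i2 * y b)
        - y i2 * (c1 * x i0 * x b + c2 * y i0 * y b)); first ring.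
    by rewrite !P; ring.
  - rewrite crossE2; transitivity (y i1 * (c1 * x i0 * x b + c2 * y i0 * y b)
        - y i0 * (c1 * x i1 * x b + c2 * y i1 * y b)); first ring.
    by rewrite !P; ring.
have Q2 : forall b, c2 * y b * cross x y k = 0.
  move=> b; case: (ord3P k) => ->.
  - rewrite crossE0; transitivity (x i1 * (c1 * x i2 * x b + c2 * y i2 * y b)
        - x i2 * (c1 * x i1 * x b + c2 * y i1 * y b)); first ring.
    by rewrite !P; ring.
  - rewrite crossE1; transitivity (x i2 * (c1 * x i0 * x b + c2 * y i0 * y b)
        - x i0 * (c1 * x i2 * x b + c2 * y i2 * y b)); first ring.
    by rewrite !P; ring.
  - rewrite crossE2; transitivity (x i0 * (c1 * x i1 * x b + c2 * y i1 * y b)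
        - x i1 * (c1 * x i0 * x b + c2 * y i0 * y b)); first ring.
    by rewrite !P; ring.
have [bx Hbx] : exists b, x b != 0.
  case: (vec_cases x) => [H0|//]; move: Hk.
  by case: (ord3P k) => ->; rewrite ?crossE0 ?crossE1 ?crossE2 !H0 !mul0r subrr eqxx.
have [bY Hby] : exists b, y b != 0.
  case: (vec_cases y) => [H0|//]; move: Hk.
  by case: (ord3P k) => ->; rewrite ?crossE0 ?crossE1 ?crossE2 !H0 !mulr0 subrr eqxx.
split.
  by move/eqP: (Q1 bx); rewrite !mulf_eq0 (negbTE Hbx) (negbTE Hk) !orbF => /eqP.
by move/eqP: (Q2 bY); rewrite !mulf_eq0 (negbTE Hby) (negbTE Hk) !orbF => /eqP.
Qed.

Lemma finish_w (f : tens3 R) (b1 b2 : vec3 R) (w : 'I_3 -> R) (j : 'I_3) :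
  real_tens f -> f = tadd (cube b1) (cube b2) -> bil b1 b1 = 0 -> bil b2 b2 = 0 ->
  w j != 0 -> bil b1 (rvec w) = 0 -> bil b2 (rvec w) = 0 -> Goal0 f.
Proof.
move=> Hr Hf H11 H22 Hj Hw1 Hw2.
have [u [t [Hu Ht Hwu]]] := normalize Hj.
have Ew : rvec w = vscale t%:C (rvec u) by rewrite -rvec_scale; apply: rvec_eq.
have Htc : t%:C != 0 :> C by apply/eqP => /complexI /eqP; apply/negP.
have Hb : forall b, bil b (rvec w) = 0 -> bil b (rvec u) = 0.
  move=> b; rewrite Ew bil_sym bil_scale_l => /eqP; rewrite mulf_eq0 (negbTE Htc) /=.
  by move/eqP; rewrite bil_sym.
apply: (reduce_u (mu := 0) Hr Hu _ (Hb _ Hw1) (Hb _ Hw2) H11 H22).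
by rewrite Hf; apply: teq => a b c; rewrite /tadd /cube /vscale; ring.
Qed.

Lemma case_zero (f : tens3 R) (b1 b2 : vec3 R) : real_tens f ->
  f = tadd (cube b1) (cube b2) -> bil b1 b1 = 0 -> bil b2 b2 = 0 -> Goal0 f.
Proof.
move=> Hr Hf H11 H22.
case: (vec_cases (cross b1 b2)) => [Hn|[k Hk]].
  case: (vec_cases b1) => [Z|[j Hj]].
    have HK : f = tscale 1 (cube b2).
      by rewrite Hf; apply: teq => a b c; rewrite /tadd /cube /tscale !Z; ring.
    by apply: goal0_zero; rewrite HK; apply: iso_cube_zero => //; rewrite -HK.
  have E := cross0_dep Hn Hj; move: (b2 j / b1 j) E => k E.
  have HK : f = tscale (1 + k ^+ 3) (cube b1).
    by rewrite Hf E cube_scale; apply: teq => a b c; rewrite /tadd /tscale; ring.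
  by apply: goal0_zero; rewrite HK; apply: iso_cube_zero => //; rewrite -HK.
have P0 : forall a b, \sum_(l < 3) f a b l * cross b1 b2 l = 0.
  by move=> a b; rewrite Hf /tadd /cube !sum3 crossE0 crossE1 crossE2; ring.
have P1 : forall a b, \sum_(l < 3) f a b l * conjc (cross b1 b2 l) = 0.
  by move=> a b; rewrite conj_sum3 ?P0 ?conjc0 // => l; exact: Hr.
have P : forall a b, bil b1 (conjv (cross b1 b2)) * b1 a * b1 b +
                     bil b2 (conjv (cross b1 b2)) * b2 a * b2 b = 0.
  by move=> a b; rewrite -(P1 a b) Hf /tadd /cube /bil /conjv !sum3; ring.
have [c1z c2z] := kill P Hk.
have bn1 : bil b1 (cross b1 b2) = 0.
  by rewrite /bil sum3 crossE0 crossE1 crossE2; ring.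
have bn2 : bil b2 (cross b1 b2) = 0.
  by rewrite /bil sum3 crossE0 crossE1 crossE2; ring.
pose ur := fun l => Re (cross b1 b2 l).
pose vi := fun l => Im (cross b1 b2 l).
have Hre : forall b, bil b (rvec ur) = (bil b (cross b1 b2) + bil b (conjv (cross b1 b2))) / 2%:R.
  by move=> b; rewrite /bil /rvec /conjv /ur !sum3 !ReJ_add; ring.
have Him : forall b, bil b (rvec vi) = (bil b (conjv (cross b1 b2)) - bil b (cross b1 b2)) / 2%:R * 'i%C.
  by move=> b; rewrite /bil /rvec /conjv /vi !sum3 !ImJ_sub; ring.
have [Hw|Hw] : ur k != 0 \/ vi k != 0.
  case: (ur k =P 0) => [Hu0|/eqP]; last by left.
  right; apply/eqP => Hv0; move: Hk; rewrite /ur /vi in Hu0 Hv0.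
  move: Hu0 Hv0; case: (cross b1 b2 k) => p q /= -> ->.
  by rewrite (_ : (0 +i* 0 : C) = 0) // eqxx.
  by apply: (finish_w Hr Hf H11 H22 Hw); rewrite Hre ?bn1 ?bn2 ?c1z ?c2z addr0 mul0r.
by apply: (finish_w Hr Hf H11 H22 Hw); rewrite Him ?bn1 ?bn2 ?c1z ?c2z subrr !mul0r.
Qed.

End Work7.

Section Work8.
Variable R : realType.
Local Notation C := R[i].
Local Notation Im := complex.Im.
Local Notation Re := complex.Re.
Local Notation b0 := (beta0 R).
Local Notation cb0 := (conjv (beta0 R)).

Lemma cbrt_nn (l : R) : 0 <= l -> exists c : R, c ^+ 3 = l.
Proof.
move=> Hl.
have Hz : 0 <= 3.-root (l%:C : C) by rewrite rootC_ge0 // ler0c.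
have Ez := crealE (ger0_Im Hz).
exists (Re (3.-root (l%:C : C))); apply: complexI.
have -> : ((Re (3.-root (l%:C : C))) ^+ 3)%:C = (Re (3.-root (l%:C : C)))%:C ^+ 3 by ring.
by rewrite -Ez rootCK.
Qed.

Lemma cbrt (l : R) : exists c : R, c ^+ 3 = l.
Proof.
case: (lerP 0 l) => Hl; first exact: cbrt_nn.
have [c Hc] : exists c : R, c ^+ 3 = - l by apply: cbrt_nn; lra.
by exists (- c); rewrite -[l]opprK -Hc; ring.
Qed.

Lemma goal0 (f : tens3 R) (al b1 b2 : vec3 R) : real_tens f ->
  f = tadd (tadd (cube al) (cube b1)) (cube b2) ->
  bil al b1 = 0 -> bil b1 b1 = 0 -> bil al b2 = 0 -> bil b2 b2 = 0 -> Goal0 f.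
Proof.
move=> Hr Hf H1 H11 H2 H22.
case: (boolP (bil al al == 0)) => [/eqP Hq|Hq]; last exact: case_q Hf H1 H11 H2 H22 Hq.
case: (vec_cases al) => [Z|[j Hj]]; last exact: case_iso Hf H1 H11 H2 H22 Hq Hj.
apply: (case_zero Hr _ H11 H22).
by rewrite Hf; apply: teq => a b c; rewrite /tadd /cube !Z; ring.
Qed.

Lemma bil_scale_r (c : C) (x y : vec3 R) : bil x (vscale c y) = c * bil x y.
Proof. by rewrite /bil /vscale !sum3; ring. Qed.

End Work8.

Theorem mainTheorem3 (R : realType) (f : tens3 R)
  (alpha beta1 beta2 : vec3 R) :
  real_tens f -> sym_tens f ->
  f = tadd (tadd (cube alpha) (cube beta1)) (cube beta2) ->
  bil alpha beta1 = 0 -> bil beta1 beta1 = 0 ->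
  bil alpha beta2 = 0 -> bil beta2 beta2 = 0 ->
  (exists (T : 'M[R]_3) (eps : bool) (c lam : R),
      [/\ orthogonal3 T, c != 0 &
        tscale c%:C (tact T f) =
        tadd (tscale (eps%:R)%:C (tadd (cube (beta0 R)) (cube (conjv (beta0 R)))))
             (tscale lam%:C (cube (e3 R)))])
  /\
  (exists (a : 'I_3 -> R) (beta : vec3 R),
      [/\ f = tadd (tadd (cube (rvec a)) (cube beta)) (cube (conjv beta)),
          bil (rvec a) beta = 0 & bil beta beta = 0]).
Proof.
move=> Hr _ Hf H1 H11 H2 H22.
have [T [l0 [r [OT HT]]]] := goal0 Hr Hf H1 H11 H2 H22.
split.
  case: (r =P 0) => [r0|/eqP rn0].
    exists T, false, 1, l0; split => //; first exact: oner_neq0.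
    rewrite HT r0; apply: teq => i j k; rewrite /tadd /tscale /=; ring.
  exists T, true, (r ^+ 3)^-1, (l0 / r ^+ 3); split => //.
    by rewrite invr_eq0 expf_eq0 /= (negbTE rn0).
  rewrite HT; apply: teq => i j k; rewrite /tadd /tscale /=; field.
  by apply/eqP => H; move/eqP: rn0; apply; apply: complexI; exact: H.
have [cr Hcr] := cbrt l0.
have OTt : orthogonal3 T^T by rewrite /orthogonal3 trmxK; exact: mulmx1C.
have HTt : tact T^T (tact T f) = f.
  by rewrite Hf !tact_add !tact_cube -!mv_mul (mulmx1C OT) !mv1.
exists (fun i => cr * \sum_(k < 3) T^T i k * e3r R k), (vscale r%:C (mv T^T (beta0 R))).
have Ea : rvec (fun i => cr * \sum_(k < 3) T^T i k * e3r R k) = vscale cr%:C (mv T^T (e3 R)).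
  by rewrite rvec_scale e3_rvec mv_rvec.
rewrite Ea; split.
- rewrite -{1}HTt HT !(tact_add, tact_scale, tact_cube) conjv_scale conjc_real conjv_mv.
  rewrite !cube_scale -Hcr; apply: teq => i j k; rewrite /tadd /tscale; ring.
- rewrite bil_scale_l bil_scale_r bil_mv // /bil sum3 e3E0 e3E1 e3E2 b0E0 b0E1 b0E2; ring.
- rewrite bil_scale_l bil_scale_r bil_mv // /bil sum3 b0E0 b0E1 b0E2.
  have -> : 1 * 1 + 'i%C * 'i%C + 0 * 0 = 1 + ('i%C : R[i]) ^+ 2 by ring.
  by rewrite sqr_ii; ring.
Qed.
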